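(* For every finite hypergraph $H$, $\mathrm{ch}_{um}(H)\le s(H)$.
   Context: For a hypergraph $H$ with hyperedge set $\mathcal E(H)$ (nonempty hyperedges), $s(H)$ is the minimum positive integer $s$ with $|\mathcal E(H)|\le s(s-1)/2$. A coloring $C\colon V\to\mathbb Z_{>0}$ is unique-maximum if in every hyperedge the maximum color is attained by exactly one vertex. The um-choice number $\mathrm{ch}_{um}(H)$ is the minimum $k$ such that for every family $\{L_v\}_{v\in V}$ of sets of positive integers with $|L_v|\ge k$ there is a unique-maximum coloring $C$ with $C(v)\in L_v$ for all $v$. *)

(* Defs.v *)
From Stdlib Require Import Lia.
From mathcomp Require Import all_boot.
Set Implicit Arguments. Unset Strict Implicit. Unset Printing Implicit Defensive.

(* A finite hypergraph: vertex set the finType V, hyperedge set E, a set of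
   nonempty subsets of V. *)
Definition hypergraph (V : finType) (E : {set {set V}}) : Prop :=
  forall e, e \in E -> e != set0.

Definition s_pred (m : nat) : pred nat :=
  fun s => (0 < s) && (m <= (s * (s - 1)) %/ 2).

Lemma s_pred_ex (m : nat) : exists s, s_pred m s.
Proof.
exists m.+2; rewrite /s_pred /=; rewrite leq_divRL //.
rewrite subSS subn0 -[m.+2]addn2 -[m.+1]addn1.
apply/leP; rewrite -!plusE -!multE; lia.
Qed.

Definition s_of (V : finType) (E : {set {set V}}) : nat :=
  ex_minn (s_pred_ex #|E|).

Definition unique_max (V : finType) (E : {set {set V}}) (C : V -> nat) : Prop :=
  forall e, e \in E ->
    exists2 v, v \in e & forall w, w \in e -> w != v -> C w < C v.

(* Lists: finite sets of positive integers (given as sequences) with at least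
   k distinct elements. *)
Definition um_choosable (V : finType) (E : {set {set V}}) (k : nat) : Prop :=
  forall L : V -> seq nat,
    (forall v, all (fun c => 0 < c) (L v)) ->
    (forall v, k <= size (undup (L v))) ->
    exists C : V -> nat,
      (forall v, C v \in L v) /\ (forall v, 0 < C v) /\ unique_max E C.

(* ch_um(H) <= m : the minimum k with um_choosable H k is at most m,
   i.e. some k <= m is admissible. *)
Definition ch_um_le (V : finType) (E : {set {set V}}) (m : nat) : Prop :=
  exists2 k, k <= m & um_choosable E k.

(* Main.v *)
Require Import Defs.
From mathcomp Require Import all_boot.
From Stdlib Require Import Lia.
Set Implicit Arguments. Unset Strict Implicit. Unset Printing Implicit Defensive.

Lemma max_in (s : seq nat) : s != [::] -> \max_(x <- s) x \in s.
Proof.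
elim: s => [//|x s IH] _; rewrite big_cons.
case: s IH => [|y s] IH; first by rewrite big_nil maxn0 mem_seq1.
move: (IH isT); rewrite /maxn; case: ltnP => _ H; rewrite inE ?eqxx //.
by rewrite H orbT.
Qed.

Lemma exists_notin (s D : seq nat) :
  size D < size (undup s) -> exists2 x, x \in s & x \notin D.
Proof.
move=> h; case: (boolP (all (fun x => x \in D) s)) => [/allP a | ].
- exfalso; have : size (undup s) <= size D.
    by apply: uniq_leq_size (undup_uniq s) _ => x; rewrite mem_undup => /a.
  by rewrite leqNgt h.
- rewrite -has_predC => /hasP [x xs xD]; by exists x.
Qed.

Lemma setD1_notin (T : finType) (A : {set T}) x : x \notin A -> A :\ x = A.
Proof.
move=> xA; apply/setP => y; rewrite in_setD1; case: eqP => // ->.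
by rewrite (negbTE xA).
Qed.

Section Main.
Variable V : finType.

Lemma empty_case (U : {set V}) (F : {set {set V}}) (L : V -> seq nat) :
  U = set0 -> set0 \notin F -> (forall e, e \in F -> e \subset U) ->
  exists C : V -> nat, (forall u, u \in U -> C u \in L u) /\ unique_max F C.
Proof.
move=> U0 hF0 hFU; exists (fun _ => 0); split; first by move=> u; rewrite U0 inE.
move=> e eF; have := hFU e eF; rewrite U0 subset0 => /eqP e0.
by rewrite -e0 eF in hF0.
Qed.

Lemma main n : forall (U : {set V}) (F : {set {set V}}) k (L : V -> seq nat),
  #|U| <= n -> 0 < k -> set0 \notin F -> (forall e, e \in F -> e \subset U) ->
  2 * #|F| <= k * (k - 1) -> (forall u, u \in U -> k <= size (undup (L u))) ->
  exists C : V -> nat, (forall u, u \in U -> C u \in L u) /\ unique_max F C.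
Proof.
elim: n => [|n IH] U F k L hU hk hF0 hFU hFk hL.
  apply: empty_case => //; apply/eqP; by rewrite -cards_eq0 -leqn0.
case: (set_0Vmem U) => [U0 | [u0 u0U]]; first exact: empty_case.
pose f u := \max_(x <- L u) x.
case: (arg_maxnP f u0U) => v vU0 vmax.
have vU : v \in U := vU0.
set S := [set e in F | v \in e].
have hU' : #|U :\ v| <= n.
  by move: hU; rewrite (cardsD1 v U) vU.
case: (ltnP #|S| k) => hdeg.
-
  pose F' := [set e :\ v | e in F] :\ set0.
  have [C' [C'L C'u]] : exists C : V -> nat,
      (forall u, u \in U :\ v -> C u \in L u) /\ unique_max F' C.
    apply: IH hU' hk _ _ _ _.
    + by rewrite in_setD1 eqxx.
    + move=> e; rewrite in_setD1 => /andP [_ /imsetP [e0 e0F ->]].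
      by apply: setSD; apply: hFU.
    + apply: leq_trans hFk; rewrite leq_mul2l; apply/orP; right.
      apply: leq_trans (leq_imset_card _ _).
      by apply: subset_leq_card; apply: subsetDl.
    + by move=> u; rewrite in_setD1 => /andP [_ /hL].
  pose Mx e := \max_(w in e :\ v) C' w.
  pose D := [seq Mx e | e <- enum S].
  have [x xL xD] : exists2 x, x \in L v & x \notin D.
    apply: exists_notin; rewrite size_map -cardE.
    exact: leq_trans hdeg (hL v vU).
  exists (fun u => if u == v then x else C' u); split.
    move=> u uU; case: eqP => [->//|/eqP uv]; apply: C'L.
    by rewrite in_setD1 uv.
  move=> e eF; case: (boolP (v \in e)) => ve.
  + case: (eqVneq (e :\ v) set0) => e'0.
      exists v => // w we wv; exfalso.
      have : w \in e :\ v by rewrite in_setD1 wv we.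
      by rewrite e'0 inE.
    have e'F' : e :\ v \in F' by rewrite in_setD1 e'0 (imset_f (fun e => e :\ v) eF).
    have [w0 w0e' hw0] := C'u _ e'F'.
    have hM : Mx e = C' w0.
      apply/eqP; rewrite eqn_leq; apply/andP; split.
      * apply/bigmax_leqP => w we'; case: (eqVneq w w0) => [->//|ne].
        exact: ltnW (hw0 w we' ne).
      * exact: leq_bigmax_cond.
    have xM : x != C' w0.
      apply/negP => /eqP xe; move: xD; rewrite -hM in xe; rewrite xe.
      by rewrite map_f // mem_enum inE eF ve.
    have w0v : w0 != v by move: w0e'; rewrite in_setD1 => /andP [].
    have w0e : w0 \in e by move: w0e'; rewrite in_setD1 => /andP [].
    case: (ltngtP x (C' w0)) => hx; last by rewrite hx eqxx in xM.
    * exists w0 => // w we ww0; rewrite (negbTE w0v).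
      case: eqP => [//|/eqP wv]; apply: hw0 => //.
      by rewrite in_setD1 wv we.
    * exists v => // w we wv; rewrite (negbTE wv) eqxx.
      apply: leq_ltn_trans hx; case: (eqVneq w w0) => [->//|ne].
      apply: ltnW; apply: hw0 => //; by rewrite in_setD1 wv we.
  + have eF' : e \in F'.
      rewrite in_setD1 -{2}(setD1_notin ve) (imset_f (fun e => e :\ v) eF) andbT.
      by apply/eqP => e0; rewrite -e0 eF in hF0.
    have [w0 w0e hw0] := C'u _ eF'.
    have ne : forall w, w \in e -> (w == v) = false.
      by move=> w we; apply/eqP => wv; rewrite -wv we in ve.
    exists w0 => // w we ww0; rewrite !ne //; exact: hw0.
-
  have SF : S \subset F by apply/subsetP => e; rewrite inE => /andP [].
  have hSF : #|S| <= #|F| by apply: subset_leq_card.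
  have k3 : 3 <= k.
    have : 2 * k <= k * (k - 1) by apply: leq_trans hFk; rewrite leq_mul2l /= (leq_trans hdeg hSF).
    move=> h; apply/leP; move/leP: h; move/leP: hk => hk'.
    rewrite -!multE -!minusE; nia.
  pose c := f v.
  have Lv0 : L v != [::].
    apply/eqP => L0; have := hL v vU; rewrite L0 /=; by rewrite leqNgt hk.
  have cL : c \in L v by apply: max_in.
  have cmax : forall u y, u \in U -> y \in L u -> y <= c.
    move=> u y uU yL; apply: leq_trans (vmax u uU).
    rewrite /f; exact: leq_bigmax_seq.
  pose F'' := F :\: S.
  pose L' u := [seq y <- L u | y != c].
  have [C' [C'L C'u]] : exists C : V -> nat,
      (forall u, u \in U :\ v -> C u \in L' u) /\ unique_max F'' C.
    apply: (IH _ _ (k - 1)) hU' _ _ _ _ _.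
    + by apply/leP; move/leP: k3 => ?; rewrite -minusE; lia.
    + by rewrite in_setD negb_and hF0 orbT.
    + move=> e; rewrite in_setD => /andP [eS eF].
      apply/subsetP => w we; rewrite in_setD1 (subsetP (hFU e eF)) // andbT.
      apply/eqP => wv; move: eS; by rewrite inE eF -wv we.
    + rewrite /F'' cardsD (setIidPr SF).
      move/leP: hFk; move/leP: hdeg; move/leP: hSF; move/leP: k3.
      rewrite -!multE -!minusE => *; apply/leP; nia.
    + move=> u; rewrite in_setD1 => /andP [_ uU].
      have := hL u uU; rewrite /L' -filter_undup size_filter.
      have := count_predC (fun y => y != c) (undup (L u)).
      have := count_uniq_mem c (undup_uniq (L u)).
      have e1 : count (predC (fun y => y != c)) (undup (L u)) = count_mem c (undup (L u)).
        by apply: eq_count => y; rewrite /= negbK eq_sym.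
      rewrite e1; case: (c \in undup (L u)) => /= -> <-;
        move=> h; apply/leP; move/leP: h; rewrite -!plusE -!minusE; lia.
  exists (fun u => if u == v then c else C' u); split.
    move=> u uU; case: eqP => [->//|/eqP uv].
    have := C'L u; rewrite in_setD1 uv uU => /(_ isT).
    by rewrite mem_filter => /andP [].
  move=> e eF; case: (boolP (v \in e)) => ve.
  + exists v => // w we wv; rewrite (negbTE wv).
    have wU : w \in U by apply: (subsetP (hFU e eF)).
    have := C'L w; rewrite in_setD1 wv wU => /(_ isT).
    rewrite mem_filter => /andP [wc wL].
    by rewrite eqxx ltn_neqAle wc (cmax w _ wU wL).
  + have eF'' : e \in F'' by rewrite in_setD eF andbT inE eF (negbTE ve).
    have [w0 w0e hw0] := C'u _ eF''.
    have ne : forall w, w \in e -> (w == v) = false.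
      by move=> w we; apply/eqP => wv; rewrite -wv we in ve.
    exists w0 => // w we ww0; rewrite !ne //; exact: hw0.
Qed.

End Main.

Theorem corollary5p5 (V : finType) (E : {set {set V}}) :
  hypergraph E -> ch_um_le E (s_of E).
Proof.
move=> hE; rewrite /ch_um_le /s_of.
case: (ex_minnP (s_pred_ex #|E|)) => s /andP [s0 hs] _.
exists s => // L Lpos Lsz.
have hE0 : set0 \notin E by apply/negP => /hE; rewrite eqxx.
have h2 : 2 * #|E| <= s * (s - 1) by rewrite mulnC -leq_divRL.
have [C [CL CU]] := @main V #|V| setT E s L (max_card _) s0 hE0
  (fun e _ => subsetT e) h2 (fun u _ => Lsz u).
exists C; split; first by move=> v; apply: CL; rewrite in_setT.
split => // v.
exact: (allP (Lpos v) _ (CL v (in_setT v))).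
Qed.
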